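(* With $F(q)$ as in the context, write $F(q)=\exp\left(\sum_{d\ge1}y'_dq^d\right)$. Then for every $d\ge1$, $$y'_d=\sum_{0<d_1<\dots<d_r=d}\frac{y_{d_1}\prod_{i=2}^r\left(x_{d_i-d_{i-1}}d_{i-1}\right)}{r!}.$$
   Context: $x_1,x_2,\dots,y_1,y_2,\dots$ are indeterminates and $F(q)=\sum_{d\ge0}\sum_{0=d_0<d_1<\dots<d_r=d}\frac{\prod_{i=1}^r(y_{d_i-d_{i-1}}+x_{d_i-d_{i-1}}d_{i-1})}{r!}q^d$, a formal power series in $q$ with constant term $1$ and coefficients in $\mathbb Q[x_k,y_k]_{k\ge1}$. *)

(* Defs.v *)
From HB Require Import structures.
From mathcomp Require Import all_boot all_order all_algebra.
Set Implicit Arguments. Unset Strict Implicit. Unset Printing Implicit Defensive.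
Import Order.TTheory GRing.Theory Num.Theory.
Local Open Scope ring_scope.

(* Formal power series in q over a commutative Q-algebra A,
   represented by their coefficient sequences nat -> A. *)
Section PS.
Variable A : comAlgType rat.

Definition ps1 : nat -> A := fun n => (n == 0)%:R.

Definition psmul (f g : nat -> A) : nat -> A :=
  fun n => \sum_(i < n.+1) f i * g (n - i)%N.

Definition psexpn (f : nat -> A) (k : nat) : nat -> A := iter k (psmul f) ps1.

(* exp(f) = sum_k f^k / k!, for f with zero constant term
   (then only k <= n contributes to the coefficient of q^n). *)
Definition psexp (f : nat -> A) : nat -> A :=
  fun n => \sum_(k < n.+1) ((k`!)%:R^-1 : rat) *: psexpn f k n.

(* A chain 0 = d_0 < d_1 < ... < d_r = d, given as s = [:: d_1; ...; d_r]. *)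
Definition chainb (d : nat) (s : seq nat) : bool :=
  sorted ltn (0%N :: s) && (last 0%N s == d).

Definition chain_at (s : seq nat) (i : nat) : nat := nth 0%N (0%N :: s) i.

Variables x y : nat -> A.

Definition Fser : nat -> A := fun d =>
  \sum_(r < d.+1) \sum_(t : r.-tuple 'I_d.+1 | chainb d (map val t))
     ((r`!)%:R^-1 : rat) *:
       \prod_(i < r)
         (y (chain_at (map val t) i.+1 - chain_at (map val t) i)%N
          + x (chain_at (map val t) i.+1 - chain_at (map val t) i)%N
              * (chain_at (map val t) i)%:R).

Definition ylog : nat -> A := fun d =>
  \sum_(r < d.+1) \sum_(t : r.-tuple 'I_d.+1 | chainb d (map val t))
     ((r`!)%:R^-1 : rat) *:
       \prod_(i < r)
         (if i == 0 :> nat then y (chain_at (map val t) 1)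
          else x (chain_at (map val t) i.+1 - chain_at (map val t) i)%N
                 * (chain_at (map val t) i)%:R).

End PS.

(* Main.v *)
Require Import Defs.
From HB Require Import structures.
From mathcomp Require Import all_boot all_order all_algebra ring zify.
From mathcomp Require Import boolp.
Import GRing.Theory Num.Theory.
Local Open Scope ring_scope.

Lemma tri_exch (R : zmodType) n (F : nat -> nat -> R) :
  \sum_(i < n.+1) \sum_(j < i.+1) F i j =
  \sum_(j < n.+1) \sum_(k < (n - j).+1) F (k + j)%N j.
Proof.
transitivity (\sum_(i < n.+1) \sum_(j < n.+1) (if (j <= i)%N then F i j else 0)).
  apply: eq_bigr => i _.
  rewrite (big_ord_widen n.+1 (F i) (ltn_ord i)) big_mkcond /=.
  by apply: eq_bigr => j _; rewrite ltnS.
rewrite exchange_big; apply: eq_bigr => j _.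
rewrite -(big_mkord xpredT (fun i => if (j <= i)%N then F i j else 0)) -(big_mkord xpredT (fun k => F (k + j)%N j)).
rewrite (big_cat_nat _ (n:=j)); [|by []|by rewrite ltnW].
rewrite big_nat_cond big1; last first.
  by move=> i /andP[/andP[_ hi] _]; rewrite leqNgt hi.
rewrite Monoid.mul1m -{1}(add0n j) big_addn subSn; last by rewrite -ltnS.
by apply: eq_bigr => i _; rewrite leq_addl.
Qed.

Section Ser.
Variable A : comAlgType rat.
Definition ser := nat -> A.
HB.instance Definition _ := Choice.on ser.
Definition sadd (f g : ser) : ser := fun n => f n + g n.
Definition sopp (f : ser) : ser := fun n => - f n.
Definition szero : ser := fun _ => 0.
Lemma saddA : associative sadd.
Proof. by move=> f g h; apply/funext=> n; rewrite /sadd addrA. Qed.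
Lemma saddC : commutative sadd.
Proof. by move=> f g; apply/funext=> n; rewrite /sadd addrC. Qed.
Lemma sadd0 : left_id szero sadd.
Proof. by move=> f; apply/funext=> n; rewrite /sadd add0r. Qed.
Lemma saddN : left_inverse szero sopp sadd.
Proof. by move=> f; apply/funext=> n; rewrite /sadd /sopp addNr. Qed.
HB.instance Definition _ := GRing.isZmodule.Build ser saddA saddC sadd0 saddN.

Lemma smulC : commutative (@psmul A : ser -> ser -> ser).
Proof.
move=> f g; apply/funext=> n; rewrite /psmul.
rewrite (reindex_inj rev_ord_inj) /=; apply: eq_bigr => i _.
by rewrite subSS subKn 1?mulrC // -ltnS.
Qed.

Lemma smulA : associative (@psmul A : ser -> ser -> ser).
Proof.
move=> f g h; apply/funext=> n; rewrite /psmul.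
symmetry; under eq_bigr do rewrite big_distrl /=.
rewrite (tri_exch _ n (fun i j => f j * g (i - j)%N * h (n - i)%N)); apply: eq_bigr => j _; rewrite big_distrr /=.
apply: eq_bigr => k _; rewrite addnK mulrA; congr (_ * h _).
by rewrite addnC subnDA.
Qed.

Lemma smul1 : left_id (@ps1 A : ser) (@psmul A : ser -> ser -> ser).
Proof.
move=> f; apply/funext=> n; rewrite /psmul big_ord_recl /= /ps1 /= mul1r subn0.
by rewrite big1 ?addr0 // => i _; rewrite mul0r.
Qed.

Lemma smulDl : left_distributive (@psmul A : ser -> ser -> ser) (+%R : ser -> ser -> ser).
Proof.
move=> f g h; apply/funext=> n.
transitivity (psmul f h n + psmul g h n); last by [].
by rewrite /psmul -big_split; apply: eq_bigr => i _; exact: mulrDl.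
Qed.

HB.instance Definition _ := GRing.Zmodule_isComPzRing.Build ser smulA smulC smul1 smulDl.

Lemma serD (f g : ser) n : (f + g) n = f n + g n. Proof. by []. Qed.
Lemma serM (f g : ser) n : (f * g) n = \sum_(i < n.+1) f i * g (n - i)%N. Proof. by []. Qed.
Lemma ser1 n : (1 : ser) n = (n == 0%N)%:R. Proof. by []. Qed.
Lemma ser0 n : (0 : ser) n = 0. Proof. by []. Qed.
Lemma serN (f : ser) n : (- f) n = - f n. Proof. by []. Qed.
Lemma serMn (f : ser) k n : (f *+ k) n = f n *+ k.
Proof. by elim: k => [|k IH]; rewrite ?mulr0n // !mulrS serD IH. Qed.
Lemma serS I (r : seq I) (P : pred I) (F : I -> ser) n :
  (\sum_(i <- r | P i) F i) n = \sum_(i <- r | P i) F i n.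
Proof. by elim/big_rec2: _ => // i y1 y2 _ <-. Qed.
Lemma serX (f : ser) k : f ^+ k = psexpn f k.
Proof. by elim: k => // k IH; rewrite exprS IH. Qed.
End Ser.
Section Graded.
Variables (R : comPzRingType) (D : R -> R).
Hypothesis DD : forall a b, D (a + b) = D a + D b.
Hypothesis DM : forall a b, D (a * b) = D a * b + a * D b.

Lemma D0 : D 0 = 0.
Proof.
have h := DD 0 0; rewrite addr0 in h.
by move/(congr1 (fun z => z - D 0)): h; rewrite subrr addrK.
Qed.
Lemma DMn a n : D (a *+ n) = D a *+ n.
Proof. by elim: n => [|n IH]; rewrite ?D0 // !mulrS DD IH. Qed.
Lemma Dsum I (r : seq I) (P : pred I) (F : I -> R) :
  D (\sum_(i <- r | P i) F i) = \sum_(i <- r | P i) D (F i).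
Proof. by elim/big_rec2: _ => [|i y1 y2 _ <-]; rewrite ?D0 ?DD. Qed.

Variables (P Q : nat -> R) (X Y : R).
Hypothesis hP : forall r, P r.+1 = P r * Y + D (P r) * X.
Hypothesis hP0 : D (P 0) = 0.
Hypothesis hQ0 : D (Q 0) = 0.
Hypothesis hQ1 : Q 1 = Y.
Hypothesis hQ : forall j, Q j.+2 = D (Q j.+1) * X.

Lemma graded r :
  D (P r) = \sum_(j < r.+1) D (Q j) * P (r - j)%N *+ 'C(r, j).
Proof.
elim: r => [|r IH]; first by rewrite big_ord1 hP0 hQ0 mul0r mul0rn.
pose S1 := \sum_(j < r.+1) D (Q j) * P (r.+1 - j)%N *+ 'C(r, j).
pose S2 := \sum_(j < r.+1) D (Q j.+1) * P (r - j)%N *+ 'C(r, j).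
transitivity (\sum_(j < r.+1) ((D (Q j) * P (r - j)%N *+ 'C(r, j)) * Y
   + D (D (Q j) * P (r - j)%N *+ 'C(r, j)) * X
   + (D (Q j) * P (r - j)%N *+ 'C(r, j)) * D X) + P r * D Y).
  rewrite hP DD !DM IH Dsum !mulr_suml !big_split /=; ring.
transitivity (\sum_(j < r.+1) D (Q j) * P (r.+1 - j)%N *+ 'C(r, j)
   + (\sum_(j < r.+1) D (D (Q j) * X) * P (r - j)%N *+ 'C(r, j) + P r * D Y)).
  rewrite addrA -big_split /=; congr (_ + _); apply: eq_bigr => j _.
  rewrite DMn DM subSn; last by rewrite -ltnS.
  rewrite hP DM; move: (nat_of_ord j) ('C(r, j)) => k c; ring.
rewrite [X in _ + (X + _)]big_ord_recl /= subn0 hQ0 mul0r D0 mul0r mul0rn add0r.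
have -> : \sum_(i < r) D (D (Q (bump 0 i)) * X) * P (r - bump 0 i)%N *+ 'C(r, bump 0 i)
   = \sum_(i < r) D (Q i.+2) * P (r - i.+1)%N *+ 'C(r, i.+1).
  by apply: eq_bigr => i _; rewrite hQ.
rewrite [RHS]big_ord_recl /= hQ0 !mul0r mul0rn add0r.
under [RHS]eq_bigr do rewrite subSS binS mulrnDr.
rewrite big_split /=; congr (_ + _).
  rewrite big_ord_recl /= hQ0 !mul0r mul0rn add0r.
  rewrite [RHS]big_ord_recr /= bin_small // mulr0n addr0.
  by apply: eq_bigr => i _; rewrite subSS.
by rewrite [RHS]big_ord_recl /= subn0 bin0 mulr1n hQ1 mulrC addrC.
Qed.
End Graded.
Fixpoint chains (r d : nat) : seq (seq nat) :=
  match r with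
  | 0 => if d == 0%N then [:: [::]] else [::]
  | r'.+1 => flatten [seq [seq rcons s d | s <- chains r' m] | m <- iota 0 d]
  end.

Lemma path_last_ge a s : path ltn a s -> (a <= last a s)%N /\ (forall z, z \in s -> z <= last a s)%N.
Proof.
elim: s a => [|b s IH] a /=; first by split.
case/andP=> hab /IH [h1 h2]; split; first exact: leq_trans (ltnW hab) h1.
by move=> z; rewrite inE => /orP[/eqP->|/h2].
Qed.

Lemma mem_chains r d s : (s \in chains r d) = (size s == r) && chainb d s.
Proof.
elim: r d s => [|r IH] d s /=.
  case: s => [|z s] /=; first by rewrite /chainb /=; case: d.
  by case: (d == 0%N).
case/lastP: s => [|s z].
  apply/negbTE/flattenP => -[l /mapP[m _ ->] /mapP[s _]]; case: s => // ?.
rewrite size_rcons eqSS /chainb /= rcons_path last_rcons.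
apply/flattenP/idP.
  case=> l /mapP[m]; rewrite mem_iota add0n => /andP[_ hm] -> /mapP[s' hs'].
  case/rcons_inj => -> ->; move: hs'; rewrite IH /chainb /= => /and3P[hsz hp /eqP hl].
  by rewrite hsz hp hl hm eqxx.
case/and3P=> hsz /andP[hp hlt] /eqP hz; subst z.
exists [seq rcons s0 d | s0 <- chains r (last 0%N s)]; last first.
  by apply: map_f; rewrite IH hsz /chainb /= hp eqxx.
by apply: map_f; rewrite mem_iota add0n.
Qed.

Lemma uniq_flatten_key (T U : eqType) (l : seq U) (f : U -> seq T) (k : T -> U) :
  uniq l -> (forall u, uniq (f u)) -> (forall u t, t \in f u -> k t = u) ->
  uniq (flatten (map f l)).
Proof.
move=> ul uf hk; elim: l ul => [|u l IH] //= /andP[ul1 ul2].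
rewrite cat_uniq uf IH // andbT; apply/hasPn => t /flattenP[l' /mapP[u' hu' ->]] ht.
apply/negP => /hk hu; move: (hk _ _ ht); rewrite hu => eu; subst u'.
by rewrite hu' in ul1.
Qed.

Lemma chains_last r d s : s \in chains r d -> last 0%N s = d.
Proof. by rewrite mem_chains => /andP[_ /andP[_ /eqP]]. Qed.

Lemma uniq_chains r d : uniq (chains r d).
Proof.
elim: r d => [|r IH] d /=; first by case: (d == 0%N).
apply: (@uniq_flatten_key _ _ _ _ (fun t => last 0%N (belast 0%N t))).
- exact: iota_uniq.
- by move=> m; rewrite map_inj_uniq //; exact: rcons_injl.
- by move=> m t /mapP[s hs ->]; rewrite belast_rcons; exact: chains_last hs.
Qed.

Lemma tuple_chains (R : zmodType) d r (F : seq nat -> R) :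
  \sum_(t : r.-tuple 'I_d.+1 | chainb d (map val t)) F (map val t) = \sum_(s <- chains r d) F s.
Proof.
rewrite -(big_map (fun t : r.-tuple 'I_d.+1 => map val (tval t)) (chainb d) F) -big_filter.
apply: perm_big; apply: uniq_perm.
- rewrite filter_uniq // map_inj_uniq ?index_enum_uniq // => t1 t2 /(inj_map val_inj) h12.
  exact: val_inj.
- exact: uniq_chains.
move=> s; rewrite mem_filter mem_chains andbC; apply/andP/andP=> [[/mapP[t _ ->] hc]|[/eqP hs hc]].
  by rewrite size_map size_tuple eqxx.
split => //; apply/mapP.
have hsz : size (map (@inord d) s) == r by rewrite size_map hs.
exists (Tuple hsz); first exact: mem_index_enum.
rewrite /= -map_comp map_id_in // => z hz /=; rewrite inordK // ltnS.
case/andP: hc => hp /eqP hl; have [_ h2] := path_last_ge _ _ hp; rewrite -hl; exact: h2.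
Qed.

Section Main.
Variable A : comAlgType rat.
Variables x y : nat -> A.
Local Notation S := (ser A).

Definition th (f : S) : S := fun n => f n *+ n.
Lemma thD (f g : S) : th (f + g) = th f + th g.
Proof. by apply/funext => n; rewrite /th !serD mulrnDl. Qed.
Lemma thM (f g : S) : th (f * g) = th f * g + f * th g.
Proof.
apply/funext => n; rewrite /th serD !serM -sumrMnl -big_split; apply: eq_bigr => i _ /=.
rewrite mulrnAl mulrnAr -mulrnDr subnKC //; by rewrite -ltnS.
Qed.
Lemma th1 : th 1 = 0.
Proof. by apply/funext => -[|n]; rewrite /th ?mulr0n // ser1 ser0 mul0rn. Qed.

Definition cw (W : nat -> nat -> nat -> A) (r : nat) (s : seq nat) :=
  \prod_(i < r) W i (chain_at s i) (chain_at s i.+1).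
Definition Pw W r : S := fun d => \sum_(s <- chains r d) cw W r s.

Lemma Pw0 W : Pw W 0 = 1.
Proof.
apply/funext => -[|d]; rewrite /Pw /= ?big_seq1 ?big_nil ser1 //.
by rewrite /cw big_ord0.
Qed.

Lemma chain_at_rcons s d i : (i <= size s)%N -> chain_at (rcons s d) i = chain_at s i.
Proof. by move=> hi; rewrite /chain_at -rcons_cons nth_rcons /= ltnS hi. Qed.

Lemma cw_rcons W r s d : size s = r -> cw W r.+1 (rcons s d) = cw W r s * W r (last 0%N s) d.
Proof.
move=> hs; rewrite /cw big_ord_recr /=; congr (_ * _).
  apply: eq_bigr => i _; have hi := ltn_ord i.
  rewrite !chain_at_rcons // hs //; exact: ltnW.
rewrite chain_at_rcons ?hs // /chain_at -rcons_cons nth_rcons /= hs ltnn eqxx.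
by rewrite -hs -[size s]/((size (0%N :: s)).-1) nth_last.
Qed.

Lemma PwS W r d : Pw W r.+1 d = \sum_(m < d) Pw W r m * W r m d.
Proof.
rewrite /Pw /= big_flatten /= big_map.
have -> : iota 0 d = index_iota 0 d by rewrite /index_iota subn0.
rewrite big_mkord; apply: eq_bigr => m _; rewrite big_map mulr_suml.
rewrite big_seq [RHS]big_seq; apply: eq_bigr => s hs.
rewrite cw_rcons ?(chains_last _ _ _ hs) //.
by move: hs; rewrite mem_chains => /andP[/eqP].
Qed.

Lemma Pw_van W r d : (d < r)%N -> Pw W r d = 0.
Proof.
elim: r d => [|r IH] d // hd; rewrite PwS big1 // => m _.
by rewrite IH ?mul0r // (leq_trans (ltn_ord m)).
Qed.

Definition Wp (i a b : nat) : A := y (b - a)%N + x (b - a)%N * a%:R.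
Definition Wq (i a b : nat) : A := if i == 0%N then y b else x (b - a)%N * a%:R.
Definition Pp r := Pw Wp r.
Definition Qq r := Pw Wq r.
Definition Yser : S := fun k => if k == 0%N then 0 else y k.
Definition Xser : S := fun k => if k == 0%N then 0 else x k.

Lemma conv_last (f g : S) n : g 0%N = 0 -> (f * g) n = \sum_(m < n) f m * g (n - m)%N.
Proof. by rewrite serM big_ord_recr /= subnn => ->; rewrite mulr0 addr0. Qed.

Lemma Pp_rec r : Pp r.+1 = Pp r * Yser + th (Pp r) * Xser.
Proof.
apply/funext => d; rewrite serD !conv_last // /Pp PwS -big_split; apply: eq_bigr => m _ /=.
rewrite /Yser /Xser /th /Wp subn_eq0 leqNgt ltn_ord /= mulrDr; congr (_ + _).
by rewrite mulr_natr mulrnAr mulrnAl.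
Qed.

Lemma Qq_rec1 : Qq 1 = Yser.
Proof.
apply/funext => -[|d]; rewrite /Qq PwS ?big_ord0 //.
rewrite big_ord_recl big1 ?addr0 Pw0 ?ser1 /= ?mul1r // => i _.
by rewrite ser1 mul0r.
Qed.

Lemma Qq_rec j : Qq j.+2 = th (Qq j.+1) * Xser.
Proof.
apply/funext => d; rewrite conv_last // /Qq PwS; apply: eq_bigr => m _.
by rewrite /Wq /Xser /th subn_eq0 leqNgt ltn_ord /= mulr_natr mulrnAr mulrnAl.
Qed.

Lemma graded_PQ r : th (Pp r) = \sum_(j < r.+1) th (Qq j) * Pp (r - j)%N *+ 'C(r, j).
Proof.
have h0 : th (Pw Wp 0) = 0 by rewrite Pw0 th1.
have h1 : th (Pw Wq 0) = 0 by rewrite Pw0 th1.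
exact: (@graded _ th thD thM Pp Qq Xser Yser Pp_rec h0 h1 Qq_rec1 Qq_rec r).
Qed.

Definition cf (r : nat) : rat := (r`!)%:R^-1.

Lemma Fser_eq d : Fser x y d = \sum_(r < d.+1) cf r *: Pp r d.
Proof.
apply: eq_bigr => r _; rewrite -scaler_sumr; congr (_ *: _).
exact: (tuple_chains _ d r (cw Wp r)).
Qed.

Lemma ylog_eq d : ylog x y d = \sum_(r < d.+1) cf r *: Qq r d.
Proof.
apply: eq_bigr => r _; rewrite -scaler_sumr; congr (_ *: _).
rewrite /Qq /Pw -(tuple_chains _ d r (cw Wq r)); apply: eq_bigr => t _.
rewrite /cw; apply: eq_bigr => i _; rewrite /Wq.
by case: (nat_of_ord i =P 0%N) => [->|].
Qed.


Lemma sum_widen (R : zmodType) m N (F : nat -> R) : (m <= N)%N ->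
  (forall k, (m <= k)%N -> (k < N)%N -> F k = 0) -> \sum_(k < m) F k = \sum_(k < N) F k.
Proof.
move=> hmN hF; rewrite (big_ord_widen N F hmN) big_mkcond /=; apply: eq_bigr => k _.
by case: ifP => // /negbT; rewrite -leqNgt => h; rewrite hF.
Qed.

Lemma van_mul (f g : S) a b : (forall m, (m < a)%N -> f m = 0) ->
  (forall m, (m < b)%N -> g m = 0) -> forall m, (m < a + b)%N -> (f * g) m = 0.
Proof.
move=> hf hg m hm; rewrite serM big1 // => i _.
case: (ltnP i a) => hi; first by rewrite hf ?mul0r.
have hi' := ltn_ord i; rewrite hg ?mulr0 //; lia.
Qed.

Lemma van_exp (g : S) k : g 0%N = 0 -> forall m, (m < k)%N -> (g ^+ k) m = 0.
Proof.
move=> g0; elim: k => [|k IH] m hm //; rewrite exprS.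
by apply: (van_mul _ _ 1 k) => // -[|j].
Qed.

Lemma cancel_nat (a b : A) n : a *+ n.+1 = b *+ n.+1 -> a = b.
Proof.
have e : forall z : A, z *+ n.+1 = ((n.+1)%:R : rat) *: z by move=> z; rewrite scaler_nat.
move=> h; have := congr1 (fun z => ((n.+1)%:R^-1 : rat) *: z) h.
by rewrite !e !scalerA mulVf ?scale1r // pnatr_eq0.
Qed.

Lemma cfS k : cf k.+1 * (k.+1)%:R = cf k.
Proof. by rewrite /cf factS natrM invfM mulrAC mulVf ?mul1r // pnatr_eq0. Qed.

Lemma cf_bin r j : (j <= r)%N -> cf r * ('C(r, j))%:R = cf j * cf (r - j)%N.
Proof.
move=> hj; rewrite /cf -(bin_fact hj) !natrM.
have h1 : ('C(r, j)%:R : rat) != 0 by rewrite pnatr_eq0 -lt0n bin_gt0.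
have h2 : ((j`!)%:R : rat) != 0 by rewrite pnatr_eq0 -lt0n fact_gt0.
have h3 : (((r - j)`!)%:R : rat) != 0 by rewrite pnatr_eq0 -lt0n fact_gt0.
by rewrite !invfM mulrC !mulrA mulfV ?mul1r.
Qed.

Definition Gs : S := fun d => if d == 0%N then 0 else ylog x y d.

Lemma thQ_van j i : (i < j)%N -> th (Qq j) i = 0.
Proof. by move=> h; rewrite /th /Qq Pw_van ?mul0rn. Qed.

Lemma thG_eq i n : (i <= n)%N -> th Gs i = \sum_(j < n.+1) cf j *: th (Qq j) i.
Proof.
move=> hin; case: i hin => [|i] hin.
  by rewrite /th mulr0n big1 // => j _; rewrite mulr0n scaler0.
rewrite /th /Gs /= ylog_eq -sumrMnl.
rewrite (sum_widen _ _ n.+1 (fun j => cf j *: Qq j i.+1 *+ i.+1)) //; last first.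
  by move=> k hk _; rewrite /Qq Pw_van // scaler0 mul0rn.
by apply: eq_bigr => j _; rewrite scalerMnr.
Qed.

Lemma F_eq i n : (i <= n)%N -> Fser x y i = \sum_(k < n.+1) cf k *: Pp k i.
Proof.
move=> hin; rewrite Fser_eq (sum_widen _ _ n.+1 (fun k => cf k *: Pp k i)) //.
by move=> k hk _; rewrite /Pp Pw_van ?scaler0.
Qed.

Lemma thF : th (Fser x y) = th Gs * (Fser x y : S).
Proof.
apply/funext => n.
pose T j k := (cf j * cf k) *: (th (Qq j) * Pp k) n.
have Tvan : forall j k, (n < j + k)%N -> T j k = 0.
  move=> j k hjk; rewrite /T (van_mul _ _ j k) ?scaler0 //.
    by move=> m hm; rewrite thQ_van.
  by move=> m hm; rewrite /Pp Pw_van.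
transitivity (\sum_(j < n.+1) \sum_(k < n.+1) T j k).
  rewrite {1}/th (F_eq _ _ (leqnn n)) -sumrMnl.
  transitivity (\sum_(r < n.+1) \sum_(j < r.+1) T j (r - j)%N).
    apply: eq_bigr => r _; rewrite scalerMnr -/(th (Pp r) n) graded_PQ serS scaler_sumr.
    apply: eq_bigr => j _; rewrite serMn /T -scalerA -scaler_nat scalerA cf_bin.
      by rewrite scalerA.
    by rewrite -ltnS.
  etransitivity; first exact: (tri_exch _ n (fun r j => T j (r - j)%N)).
  apply: eq_bigr => j _.
  under eq_bigr do rewrite addnK.
  apply: (sum_widen _ _ _ (fun k => T j k)); first by rewrite ltnS leq_subr.
  by move=> k hk _; apply: Tvan; move: hk (ltn_ord j); lia.
rewrite serM.
transitivity (\sum_(i < n.+1) \sum_(j < n.+1) \sum_(k < n.+1)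
   (cf j * cf k) *: (th (Qq j) i * Pp k (n - i)%N)).
  rewrite [RHS]exchange_big; apply: eq_bigr => j _.
  rewrite [RHS]exchange_big; apply: eq_bigr => k _.
  by rewrite /T serM scaler_sumr.
apply: eq_bigr => i _; have hi : (i <= n)%N by rewrite -ltnS.
rewrite (thG_eq _ _ hi) (F_eq _ _ (leq_subr i n)).
rewrite mulr_suml; apply: eq_bigr => j _; rewrite mulr_sumr; apply: eq_bigr => k _.
by rewrite -scalerAl -scalerAr scalerA.
Qed.


Lemma thX (g : S) k : th (g ^+ k.+1) = th g * g ^+ k *+ k.+1.
Proof.
elim: k => [|k IH]; first by rewrite expr1 expr0 mulr1.
by rewrite exprS thM IH mulrnAr mulrCA -exprS [RHS]mulrS.
Qed.

Lemma psexp_th (g : S) : g 0%N = 0 -> th (psexp g) = th g * (psexp g : S).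
Proof.
move=> g0; apply/funext => n.
have e : forall m, psexp g m = \sum_(k < m.+1) cf k *: (g ^+ k) m.
  by move=> m; apply: eq_bigr => k _; rewrite serX.
have eW : forall m, (m <= n)%N -> psexp g m = \sum_(k < n.+1) cf k *: (g ^+ k) m.
  move=> m hm; rewrite e (sum_widen _ _ n.+1 (fun k => cf k *: (g ^+ k) m)) //.
  by move=> k hk _; rewrite van_exp ?scaler0.
transitivity (\sum_(k < n.+1) cf k *: (th g * g ^+ k) n).
  rewrite {1}/th e -sumrMnl big_ord_recl expr0 scalerMnr -/(th 1 n) th1 ser0 scaler0 add0r.
  transitivity (\sum_(k < n) cf k *: (th g * g ^+ k) n).
    apply: eq_bigr => k _; rewrite scalerMnr -/(th (g ^+ k.+1) n) thX serMn.
    by rewrite -scaler_nat scalerA cfS.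
  apply: (sum_widen _ _ _ (fun k => cf k *: (th g * g ^+ k) n)) => // k hk hk'.
  have -> : k = n by apply/eqP; rewrite eqn_leq hk andbT -ltnS.
  rewrite (van_mul _ _ 1 n) ?scaler0 //; first by move=> -[|m] //; rewrite /th mulr0n.
  by move=> m hm; rewrite van_exp.
rewrite serM.
under [RHS]eq_bigr => i _ do rewrite (eW _ (leq_subr i n)) mulr_sumr.
rewrite [RHS]exchange_big; apply: eq_bigr => k _.
by rewrite serM scaler_sumr; apply: eq_bigr => i _; rewrite scalerAr.
Qed.

Lemma uniq_sol (H H' g : S) : th H = th g * H -> th H' = th g * H' -> H 0%N = H' 0%N -> H = H'.
Proof.
move=> hH hH' h0; apply/funext => n; elim/ltn_ind: n => -[|n] IH //.
apply: (cancel_nat _ _ n).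
move: (congr1 (fun f : S => f n.+1) hH) (congr1 (fun f : S => f n.+1) hH') => /= e1 e2.
rewrite /th in e1 e2; rewrite e1 e2 !serM; apply: eq_bigr => -[[|i] hi] _ /=.
  by rewrite !mulr0n !mul0r.
by rewrite IH // subSS ltnS leq_subr.
Qed.

Lemma uniq_log (g g' F : S) : F 0%N = 1 -> th g * F = th g' * F -> forall n, th g n = th g' n.
Proof.
move=> F0 h n; elim/ltn_ind: n => n IH.
have := congr1 (fun f : S => f n) h; rewrite /= !serM !big_ord_recr /= subnn F0 !mulr1.
have -> : \sum_(i < n) th g i * F (n - i)%N = \sum_(i < n) th g' i * F (n - i)%N.
  by apply: eq_bigr => i _; rewrite IH.
by move/addrI.
Qed.

End Main.

Theorem mainTheorem17 (A : comAlgType rat) (x y : nat -> A) :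
  psexp (fun d => if d == 0%N then 0 else ylog x y d) = Fser x y /\
  (forall y' : nat -> A,
     psexp (fun d => if d == 0%N then 0 else y' d) = Fser x y ->
     forall d : nat, (0 < d)%N -> y' d = ylog x y d).
Proof.
have F0 : Fser x y 0%N = 1.
  by rewrite Fser_eq big_ord1 /Pp Pw0 ser1 /cf /= invr1 scale1r.
have P0 : forall g : nat -> A, psexp g 0%N = 1.
  by move=> g; rewrite /psexp big_ord1 /= invr1 scale1r.
split.
  apply: (uniq_sol _ (psexp (Gs A x y)) (Fser x y) (Gs A x y)).
  - exact: psexp_th.
  - exact: thF.
  - by rewrite P0 F0.
move=> y' hy d hd.
have h1 := psexp_th _ (fun d => if d == 0%N then 0 else y' d) erefl.
rewrite hy in h1.
have h2 := uniq_log _ _ _ (Fser x y) F0 (etrans (esym h1) (thF A x y)) d.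
case: d hd h2 => [|d] // _ h2.
exact: (cancel_nat _ _ _ d h2).
Qed.
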